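(* If $M\le 2N-2$, then for every $M$-element frame $\mathcal F$ for $\mathbb R^N$ the map $\mathbb M^{\mathcal F}$ is not injective.
   Context: A frame for $\mathbb R^N$ is a spanning family $\{f_1,\dots,f_M\}$. $\mathbb M^{\mathcal F}:\mathbb R^N/\{\pm1\}\to\mathbb R^M$, $\hat x\mapsto(|\langle x,f_k\rangle|)_k$; injectivity means $|\langle x,f_k\rangle|=|\langle y,f_k\rangle|$ for all $k$ implies $y=\pm x$. *)

(* Defs.v *)
From mathcomp Require Import all_boot all_order all_algebra.
From mathcomp Require Import reals.
Set Implicit Arguments. Unset Strict Implicit. Unset Printing Implicit Defensive.
Import Order.TTheory GRing.Theory Num.Theory.
Local Open Scope ring_scope.

Definition inner (R : realType) (N : nat) (x y : 'rV[R]_N) : R :=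
  (x *m y^T) 0 0.

(* A frame {f_1,...,f_M} for R^N: a spanning family, i.e. the matrix
   whose rows are the f_k has full row space. *)
Definition is_frame (R : realType) (N M : nat) (f : 'I_M -> 'rV[R]_N) : Prop :=
  row_full (\matrix_(k < M) f k).

Definition phaseless_map (R : realType) (N M : nat) (f : 'I_M -> 'rV[R]_N)
  (x : 'rV[R]_N) : 'I_M -> R := fun k => `|inner x (f k)|.

Definition phaseless_injective (R : realType) (N M : nat)
  (f : 'I_M -> 'rV[R]_N) : Prop :=
  forall x y : 'rV[R]_N,
    (forall k, phaseless_map f x k = phaseless_map f y k) -> y = x \/ y = - x.

(* Main.v *)
Require Import Defs.
From mathcomp Require Import all_boot all_order all_algebra.
From mathcomp Require Import reals.
From mathcomp Require Import zify.
Set Implicit Arguments. Unset Strict Implicit. Unset Printing Implicit Defensive.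
Import Order.TTheory GRing.Theory Num.Theory.
Local Open Scope ring_scope.

Lemma orth_exists (R : realType) (N s : nat) (g : 'I_s -> 'rV[R]_N) :
  (s < N)%N -> exists u : 'rV[R]_N, u != 0 /\ forall j, inner u (g j) = 0.
Proof.
move=> sN.
pose A := \matrix_(i < N, j < s) g j 0 i.
have rA : (\rank A < N)%N by apply: leq_ltn_trans (rank_leq_col A) sN.
have kA : kermx A != 0.
  by rewrite -mxrank_eq0 mxrank_ker subn_eq0 -ltnNge.
have [i Hi] : exists i, row i (kermx A) != 0.
  apply/existsP; apply: contraR kA; rewrite negb_exists => /forallP H.
  by apply/eqP/row_matrixP => i; rewrite row0; apply/eqP; move/negbNE: (H i).
exists (row i (kermx A)); split => // j.
have : (row i (kermx A) *m A) 0 j = 0 by rewrite -row_mul mulmx_ker row0 mxE.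
move=> H; apply: etrans H; rewrite /inner !mxE; apply: eq_bigr => k _; by rewrite !mxE.
Qed.

Lemma innerD (R : realType) (N : nat) (u v w : 'rV[R]_N) :
  inner (u + v) w = inner u w + inner v w.
Proof. by rewrite /inner mulmxDl mxE. Qed.
Lemma innerB (R : realType) (N : nat) (u v w : 'rV[R]_N) :
  inner (u - v) w = inner u w - inner v w.
Proof.
have H := innerD (-v) v w; rewrite addNr {1}/inner mul0mx mxE in H.
by move/esym/eqP: H; rewrite addr_eq0 innerD => /eqP ->. Qed.

Theorem proposition2p5 (R : realType) (N M : nat) :
  (M + 2 <= 2 * N)%N ->
  forall f : 'I_M -> 'rV[R]_N, is_frame f -> ~ phaseless_injective f.
Proof.
move=> hMN f _ inj.
have N1 : ((N - 1) < N)%N by lia.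
pose gS (j : 'I_(N - 1)) : 'rV[R]_N :=
  if insub (val j) is Some k then f k else 0.
pose gT (j : 'I_(N - 1)) : 'rV[R]_N :=
  if insub (val j + (N - 1))%N is Some k then f k else 0.
have [u [u0 Hu]] := orth_exists gS N1.
have [v [v0 Hv]] := orth_exists gT N1.
have HS : forall k : 'I_M, (nat_of_ord k < (N - 1))%N -> inner u (f k) = 0.
  move=> k hk; have := Hu (Ordinal hk); rewrite /gS /=.
  by rewrite (insubT (fun n => n < M)%N (ltn_ord k)) /=;
     have -> : Sub (nat_of_ord k) (ltn_ord k) = k by apply: val_inj.
have HT : forall k : 'I_M, ((N - 1) <= nat_of_ord k)%N -> inner v (f k) = 0.
  move=> k hk.
  have hk' : (nat_of_ord k - (N - 1) < (N - 1))%N.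
    have := ltn_ord k. lia.
  have := Hv (Ordinal hk'); rewrite /gT /= subnK //.
  by rewrite (insubT (fun n => n < M)%N (ltn_ord k)) /=;
     have -> : Sub (nat_of_ord k) (ltn_ord k) = k by apply: val_inj.
have := inj (u + v) (u - v).
case.
- move=> k; rewrite /phaseless_map innerD innerB.
  case: (ltnP (nat_of_ord k) (N - 1)) => hk.
    by rewrite HS // !add0r normrN.
  by rewrite HT // addr0 subr0.
- move/addrI/eqP; rewrite eq_sym -subr_eq0 opprK.
  rewrite -mulr2n -scaler_nat scaler_eq0 pnatr_eq0 /=.
  by apply/negP.
- rewrite opprD => /addIr/eqP; rewrite -subr_eq0 opprK.
  rewrite -mulr2n -scaler_nat scaler_eq0 pnatr_eq0 /=.
  by apply/negP.
Qed.
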